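(* Let $\mathcal O$ be a non-degenerate conic of $\mathrm{PG}(2,q^2)$, and $[\mathcal O]=\mathcal Q_\infty\cap\mathcal Q_0$ in $\mathrm{PG}(4,q)$, $[\mathcal O]^\star=\mathcal Q_\infty^\star\cap\mathcal Q_0^\star$ in $\mathrm{PG}(4,q^2)$, $[\mathcal O]^{\star\star}=\mathcal Q_\infty^{\star\star}\cap\mathcal Q_0^{\star\star}$ in $\mathrm{PG}(4,q^4)$. (1) If $\mathcal O\cap\ell_\infty=\{\bar P,\bar Q\}$ with $\bar P\ne\bar Q$, then $[\mathcal O]\cap\Sigma_\infty=[P]\cup[Q]$; $[\mathcal O]^\star\cap\Sigma_\infty^\star=[P]^\star\cup[Q]^\star\cup PQ^q\cup P^qQ$; and $[\mathcal O]^{\star\star}\cap\Sigma_\infty^{\star\star}=[P]^{\star\star}\cup[Q]^{\star\star}\cup(PQ^q)^{\star\star}\cup(P^qQ)^{\star\star}$. (2) If $\mathcal O\cap\ell_\infty=\{\bar P\}$ ($\ell_\infty$ tangent), then $[\mathcal O]\cap\Sigma_\infty=[P]$, $[\mathcal O]^\star\cap\Sigma_\infty^\star=[P]^\star$ and $[\mathcal O]^{\star\star}\cap\Sigma_\infty^{\star\star}=[P]^{\star\star}$. (3) If $\mathcal O\cap\ell_\infty=\emptyset$, so that the extensions of $\mathcal O$ and $\ell_\infty$ to $\mathrm{PG}(2,q^4)$ meet in two points $\bar P,\bar P^{q^2}$, then $[\mathcal O]\cap\Sigma_\infty=\emptyset$, $[\mathcal O]^\star\cap\Sigma_\infty^\star=\emptyset$,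 and $[\mathcal O]^{\star\star}\cap\Sigma_\infty^{\star\star}=\ell_P\cup\ell_P^q\cup\ell_P^{q^2}\cup\ell_P^{q^3}$, where $\ell_P=PP^q$.
   Context: Coordinates: $q$ a prime power; $\tau$ is a primitive element of $\mathbb F_{q^2}$ with minimal polynomial $x^2-t_1x-t_0$ over $\mathbb F_q$. $\mathrm{PG}(2,q^2)$ has coordinates $(x,y,z)$, $\ell_\infty: z=0$; $\mathrm{PG}(4,q)$ has coordinates $(x_0,x_1,y_0,y_1,z)$ and $\Sigma_\infty: z=0$. The Bruck–Bose map sends the affine point $(x_0+x_1\tau,y_0+y_1\tau,z)$ ($x_i,y_i,z\in\mathbb F_q$, $z\ne0$) to $(x_0,x_1,y_0,y_1,z)$, and $\bar T=(\delta,1,0)\in\ell_\infty$, $\delta=d_0+d_1\tau$, to the spread line $[T]=\langle(d_0,d_1,1,0,0),(t_0d_1,d_0+t_1d_1,0,1,0)\rangle$ (and $(1,0,0)$ to $\langle(1,0,0,0,0),(0,1,0,0,0)\rangle$); these form a regular spread $\mathcal S$ of $\Sigma_\infty$. With $A_0=(\tau^q,-1,0,0,0)$, $A_1=(0,0,\tau^q,-1,0)$, the transversals of $\mathcal S$ in $\mathrm{PG}(4,q^2)$ are $g=\langle A_0,A_1\rangle$, $g^q=\langle A_0^q,A_1^q\rangle$, where $X\mapsto X^q$ raises coordinates to the $q$-th power. For $\alpha\in\mathbb F_{q^4}\cup\{\infty\}$ the point $\bar P=(\alpha,1,0)$ of (the extension to $\mathrm{PG}(2,q^4)$ of) $\ell_\infty$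 corresponds to $P=\alpha A_0+A_1$ ($P=A_0$ if $\alpha=\infty$) on the extension of $g$; for $\bar P\in\ell_\infty$ one has $[P]^\star=PP^q$. If $\mathcal O$ has equation $f(x,y,z)=0$ over $\mathbb F_{q^2}$, substituting $x=x_0+x_1\tau$, $y=y_0+y_1\tau$ and reducing with $\tau^2=t_1\tau+t_0$ gives $f=f_\infty+\tau f_0$ with $f_\infty,f_0$ homogeneous quadratics over $\mathbb F_q$ in $(x_0,x_1,y_0,y_1,z)$; $\mathcal Q_\infty,\mathcal Q_0$ are the quadrics $f_\infty=0$, $f_0=0$. For any set $\mathcal V$ defined by equations over $\mathbb F_q$ (quadric, subspace), $\mathcal V^\star$, $\mathcal V^{\star\star}$ are the sets of points of $\mathrm{PG}(4,q^2)$, $\mathrm{PG}(4,q^4)$ satisfying the same equations; for a line $\ell$ of $\mathrm{PG}(4,q^2)$, $\ell^{\star\star}$ is its extension to $\mathrm{PG}(4,q^4)$. *)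

(* Defs.v *)
From HB Require Import structures.
From mathcomp Require Import all_boot all_order all_algebra all_field.
Set Implicit Arguments. Unset Strict Implicit. Unset Printing Implicit Defensive.
Import Order.TTheory GRing.Theory.
Local Open Scope ring_scope.

(* Standing setup: everything lives in a finite field L with #|L| = q^4,
   i.e. L = F_{q^4}.  The subfield F_{q^k} (k | 4) is {x | x^(q^k) = x}. *)
Section BB.
Variables (L : finFieldType) (q : nat).

Definition inF (k : nat) (x : L) : Prop := x ^+ (q ^ k) = x.

Definition frobv (n k : nat) (v : 'I_n -> L) : 'I_n -> L := fun i => v i ^+ (q ^ k).

(* A point of PG(n-1, q^k): nonzero vector with coordinates in F_{q^k}.
   Point sets below are homogeneous predicates on such vectors. *)
Definition ptPG (n k : nat) (v : 'I_n -> L) : Prop :=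
  (exists i, v i != 0) /\ forall i, inF k (v i).

(* v lies on the line spanned by u and w (the span over L; restricted to
   F_{q^k}-points this is the point set of the line (or of its extension)
   in PG(4,q^k) when u,w are defined over F_{q^k}). *)
Definition on_line (n : nat) (u w v : 'I_n -> L) : Prop :=
  exists l m : L, forall i, v i = l * u i + m * w i.

(* Homogeneous quadratic form in n variables given by its coefficients
   A i j for i <= j (entries with i > j are ignored):
   sum_{i <= j} A i j v_i v_j. *)
Definition qeval (n : nat) (A : 'I_n -> 'I_n -> L) (v : 'I_n -> L) : L :=
  \sum_(i < n) \sum_(j < n | (i <= j)%N) A i j * v i * v j.

(* Coefficient table of the form v |-> f(S v), where f has table A (in m
   variables) and S : m x n matrix (linear substitution x = S v). *)
Definition qsubst (m n : nat) (A : 'I_m -> 'I_m -> L) (S : 'I_m -> 'I_n -> L)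
  (k l : 'I_n) : L :=
  if (k < l)%N then
    \sum_(i < m) \sum_(j < m | (i <= j)%N) A i j * (S i k * S j l + S i l * S j k)
  else if k == l then
    \sum_(i < m) \sum_(j < m | (i <= j)%N) A i j * (S i k * S j k)
  else 0.

Variable tau : L.

(* The Bruck--Bose substitution x = x0 + x1 tau, y = y0 + y1 tau, z = z,
   variables ordered (x0,x1,y0,y1,z). *)
Definition BBsubst (i : 'I_3) (k : 'I_5) : L :=
  match nat_of_ord i, nat_of_ord k with
  | 0, 0 => 1 | 0, 1 => tau | 1, 2 => 1 | 1, 3 => tau | 2, 4 => 1
  | _, _ => 0 end.

(* For c in F_{q^2}, c = reF c + tau * imF c with reF c, imF c in F_q
   (coordinates of c in the F_q-basis {1, tau}). *)
Definition reF (c : L) : L := (tau * c ^+ q - tau ^+ q * c) / (tau - tau ^+ q).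
Definition imF (c : L) : L := (c - c ^+ q) / (tau - tau ^+ q).

(* f = f_inf + tau f_0 : coefficient tables of f_inf and f_0. *)
Definition finf (A : 'I_3 -> 'I_3 -> L) (k l : 'I_5) : L :=
  reF (qsubst A BBsubst k l).
Definition f0 (A : 'I_3 -> 'I_3 -> L) (k l : 'I_5) : L :=
  imF (qsubst A BBsubst k l).

Definition inBBO (A : 'I_3 -> 'I_3 -> L) (v : 'I_5 -> L) : Prop :=
  qeval (finf A) v = 0 /\ qeval (f0 A) v = 0.

Definition cz : 'I_5 := @Ordinal 5 4 erefl.
Definition inSigmaInf (v : 'I_5 -> L) : Prop := v cz = 0.

(* Points of ell_inf (extended): Some d is (d,1,0), None is (1,0,0). *)
Definition linf_pt (a : option L) (i : 'I_3) : L :=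
  match a with
  | Some d => match nat_of_ord i with 0 => d | 1 => 1 | _ => 0 end
  | None => match nat_of_ord i with 0 => 1 | _ => 0 end
  end.
Definition opt_inF (k : nat) (a : option L) : Prop :=
  match a with Some d => inF k d | None => True end.

Definition onO (A : 'I_3 -> 'I_3 -> L) (a : option L) : Prop :=
  qeval A (linf_pt a) = 0.

Variables (t0 t1 : L).

Definition spread_u (a : option L) (i : 'I_5) : L :=
  match a with
  | Some d => match nat_of_ord i with 0 => reF d | 1 => imF d | 2 => 1 | _ => 0 end
  | None => match nat_of_ord i with 0 => 1 | _ => 0 end
  end.
Definition spread_w (a : option L) (i : 'I_5) : L :=
  match a with
  | Some d => match nat_of_ord i with
              | 0 => t0 * imF d | 1 => reF d + t1 * imF d | 3 => 1 | _ => 0 end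
  | None => match nat_of_ord i with 1 => 1 | _ => 0 end
  end.
Definition on_spread (a : option L) (v : 'I_5 -> L) : Prop :=
  on_line (spread_u a) (spread_w a) v.

(* Transversal g = <A0, A1>; the point of g corresponding to a. *)
Definition A0 (i : 'I_5) : L :=
  match nat_of_ord i with 0 => tau ^+ q | 1 => -1 | _ => 0 end.
Definition A1 (i : 'I_5) : L :=
  match nat_of_ord i with 2 => tau ^+ q | 3 => -1 | _ => 0 end.
Definition gpt (a : option L) (i : 'I_5) : L :=
  match a with Some al => al * A0 i + A1 i | None => A0 i end.

End BB.

Definition c00 : 'I_3 := @Ordinal 3 0 erefl.
Definition c11 : 'I_3 := @Ordinal 3 1 erefl.
Definition c22 : 'I_3 := @Ordinal 3 2 erefl.

(* Non-degeneracy of the conic a x^2 + b y^2 + c z^2 + d xy + e xz + g yz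
   (valid in every characteristic): 4abc + deg - a g^2 - b e^2 - c d^2 != 0. *)
Definition nondeg_conic (L : fieldType) (A : 'I_3 -> 'I_3 -> L) : Prop :=
  let a := A c00 c00 in let b := A c11 c11 in let c := A c22 c22 in
  let d := A c00 c11 in let e := A c00 c22 in let g := A c11 c22 in
  4 * a * b * c + d * e * g - a * g ^+ 2 - b * e ^+ 2 - c * d ^+ 2 != 0.

(* Main.v *)
Require Import Defs.
From HB Require Import structures.
From mathcomp Require Import all_boot all_order all_algebra all_field.
From mathcomp Require Import ring zify.
Import GRing.Theory.
Local Open Scope ring_scope.
Set Implicit Arguments. Unset Strict Implicit. Unset Printing Implicit Defensive.

Definition o30 : 'I_3 := @Ordinal 3 0 erefl.
Definition o31 : 'I_3 := @Ordinal 3 1 erefl.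
Definition o32 : 'I_3 := @Ordinal 3 2 erefl.
Definition o50 : 'I_5 := @Ordinal 5 0 erefl.
Definition o51 : 'I_5 := @Ordinal 5 1 erefl.
Definition o52 : 'I_5 := @Ordinal 5 2 erefl.
Definition o53 : 'I_5 := @Ordinal 5 3 erefl.
Definition o54 : 'I_5 := @Ordinal 5 4 erefl.
Definition s3 := [:: o30; o31; o32].
Definition s5 := [:: o50; o51; o52; o53; o54].
Lemma ordE3 (i : 'I_3) : i = nth o30 s3 i.
Proof. by apply: val_inj; case: i => [[|[|[|]]]]. Qed.
Lemma ordE5 (i : 'I_5) : i = nth o50 s5 i.
Proof. by apply: val_inj; case: i => [[|[|[|[|[|]]]]]]. Qed.

Section S.
Variable L : finFieldType.
Lemma sum3 (F : 'I_3 -> 'I_3 -> L) :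
  \sum_(i < 3) \sum_(j < 3 | (i <= j)%N) F i j =
  F o30 o30 + F o30 o31 + F o30 o32 + F o31 o31 + F o31 o32 + F o32 o32.
Proof.
transitivity (\sum_(i < 3) \sum_(j < 3 | (i <= j)%N) F (nth o30 s3 i) (nth o30 s3 j)).
  by apply: eq_bigr => i _; apply: eq_bigr => j _; rewrite -!ordE3.
under eq_bigr => i _ do rewrite big_mkcond.
rewrite !big_ord_recl !big_ord0 /= /bump /=. 
rewrite !addr0 !add0r !addrA //.
Qed.
Lemma sum5 (F : 'I_5 -> 'I_5 -> L) :
  \sum_(i < 5) \sum_(j < 5 | (i <= j)%N) F i j =
  F o50 o50 + F o50 o51 + F o50 o52 + F o50 o53 + F o50 o54
  + F o51 o51 + F o51 o52 + F o51 o53 + F o51 o54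
  + F o52 o52 + F o52 o53 + F o52 o54 + F o53 o53 + F o53 o54 + F o54 o54.
Proof.
transitivity (\sum_(i < 5) \sum_(j < 5 | (i <= j)%N) F (nth o50 s5 i) (nth o50 s5 j)).
  by apply: eq_bigr => i _; apply: eq_bigr => j _; rewrite -!ordE5.
under eq_bigr => i _ do rewrite big_mkcond.
rewrite !big_ord_recl !big_ord0 /= /bump /=. 
rewrite !addr0 !add0r !addrA //.
Qed.
End S.
Section Frob.
Variables (L : finFieldType) (q : nat).
Variable (hq : (1 < q)%N) (hc : #|L| = (q ^ 4)%N).

Definition Fq (x : L) : L := x ^+ q.

Lemma FqD x y : Fq (x + y) = Fq x + Fq y.
Proof.
rewrite /Fq; have [p pr pc] := finPcharP L.
apply: exprDn_pchar.
have := pnat_id pr.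
rewrite -(eq_pnat _ (pcharf_eq pc)) => hp.
have : [pchar L].-nat #|L|.
  by rewrite (card_pprimeChar pc) pnatX hp.
by rewrite hc pnatX orbF.
Qed.
Lemma Fq0 : Fq 0 = 0. Proof. by rewrite /Fq expr0n; case: q hq. Qed.
Lemma Fq1 : Fq 1 = 1. Proof. by rewrite /Fq expr1n. Qed.
Lemma FqM x y : Fq (x * y) = Fq x * Fq y. Proof. by rewrite /Fq exprMn. Qed.
Lemma FqN x : Fq (- x) = - Fq x.
Proof. apply/eqP; rewrite -subr_eq0 opprK -FqD addNr Fq0 //. Qed.
Lemma FqB x y : Fq (x - y) = Fq x - Fq y. Proof. by rewrite FqD FqN. Qed.
Lemma FqV x : Fq (x^-1) = (Fq x)^-1. Proof. by rewrite /Fq exprVn. Qed.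
Lemma FqX x n : Fq (x ^+ n) = (Fq x) ^+ n. Proof. by rewrite /Fq -!exprM mulnC. Qed.
Lemma Fq_eq0 x : (Fq x == 0) = (x == 0).
Proof. by rewrite /Fq expf_eq0; case: q hq. Qed.
Lemma Fq_inj x y : Fq x = Fq y -> x = y.
Proof. move=> h; apply/eqP; rewrite -subr_eq0 -Fq_eq0 FqB h subrr //. Qed.
Lemma expq_iter x k : x ^+ (q ^ k) = iter k Fq x.
Proof.
elim: k => [|k IH]; first by rewrite expn0 expr1.
by rewrite expnS mulnC exprM IH iterS.
Qed.
Lemma Fq4 x : iter 4 Fq x = x.
Proof. by rewrite -expq_iter -hc expf_card. Qed.
Lemma iterFq_rm n : forall x, iter n Fq (x : L) = iter n Fq x.
Proof. by []. Qed.
End Frob.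

Section Q.
Variable L : finFieldType.
Lemma qBB (A : 'I_3 -> 'I_3 -> L) (t : L) (v : 'I_5 -> L) : v o54 = 0 ->
  qeval (qsubst A (BBsubst t)) v =
  A o30 o30 * (v o50 + v o51 * t) ^+ 2 + A o30 o31 * (v o50 + v o51 * t) * (v o52 + v o53 * t)
  + A o31 o31 * (v o52 + v o53 * t) ^+ 2.
Proof. by move=> h4; rewrite /qeval sum5 /qsubst /= !sum3 /= h4 /BBsubst /=; ring. Qed.
Lemma qeval_ext (M N : 'I_5 -> 'I_5 -> L) v : (forall k l, M k l = N k l) ->
  qeval M v = qeval N v.
Proof. by move=> h; rewrite /qeval !sum5 !h. Qed.
Lemma qeval_lin (M N : 'I_5 -> 'I_5 -> L) c v :
  qeval (fun k l => M k l + c * N k l) v = qeval M v + c * qeval N v.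
Proof. rewrite /qeval !sum5; ring. Qed.
Lemma qeval3 (A : 'I_3 -> 'I_3 -> L) w : qeval A w =
  A o30 o30 * w o30 * w o30 + A o30 o31 * w o30 * w o31 + A o30 o32 * w o30 * w o32
  + A o31 o31 * w o31 * w o31 + A o31 o32 * w o31 * w o32 + A o32 o32 * w o32 * w o32.
Proof. by rewrite /qeval sum3. Qed.
End Q.

Section Main.
Variables (L : finFieldType) (q : nat) (tau t0 t1 : L).
Variable (hq : (1 < q)%N) (hc : #|L| = (q ^ 4)%N).
Variable (htK : Fq q (Fq q tau) = tau) (hts : tau != Fq q tau).
Variable (ht0 : Fq q t0 = t0) (ht1 : Fq q t1 = t1) (htau2 : tau ^+ 2 = t1 * tau + t0).

Local Notation s := (Fq q tau).
Local Notation F := (Fq q).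

Lemma hts' : tau - tau ^+ q != 0. Proof. by rewrite subr_eq0. Qed.
Lemma hst' : tau ^+ q - tau != 0. Proof. by rewrite subr_eq0 eq_sym. Qed.

Lemma reim c : reF q tau c + tau * imF q tau c = c.
Proof. rewrite /reF /imF; field; exact: hts'. Qed.
Lemma reim' c : reF q tau c + tau ^+ q * imF q tau c = c ^+ q.
Proof. rewrite /reF /imF; field; exact: hts'. Qed.

Lemma FqBB (t : L) (i : 'I_3) (k : 'I_5) : F (BBsubst t i k) = BBsubst (F t) i k.
Proof.
rewrite /BBsubst; case: i => [[|[|[|i]]] hi]; case: k => [[|[|[|[|[|k]]]]] hk] //=;
  by rewrite ?(Fq0 _ hq) ?Fq1.
Qed.

Lemma Fq_qsubst (A : 'I_3 -> 'I_3 -> L) k l :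
  F (qsubst A (BBsubst tau) k l) = qsubst (fun i j => F (A i j)) (BBsubst s) k l.
Proof.
rewrite /qsubst !sum3; case: ifP => _; [|case: ifP => _]; rewrite ?(Fq0 _ hq) //;
  by rewrite !(FqD hc, FqM) !FqBB.
Qed.

Definition gq (a d b X Y : L) := a * X ^+ 2 + d * X * Y + b * Y ^+ 2.
Definition cX (t : L) (v : 'I_5 -> L) := v o50 + v o51 * t.
Definition cY (t : L) (v : 'I_5 -> L) := v o52 + v o53 * t.

Lemma inBBO_char (A : 'I_3 -> 'I_3 -> L) v : v o54 = 0 ->
  (inBBO q tau A v <->
   gq (A o30 o30) (A o30 o31) (A o31 o31) (cX tau v) (cY tau v) = 0 /\
   gq (F (A o30 o30)) (F (A o30 o31)) (F (A o31 o31)) (cX s v) (cY s v) = 0).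
Proof.
move=> h4.
have E1 : qeval (finf q tau A) v + tau * qeval (f0 q tau A) v =
   gq (A o30 o30) (A o30 o31) (A o31 o31) (cX tau v) (cY tau v).
  rewrite -qeval_lin /gq /cX /cY -qBB //; apply: qeval_ext => k l.
  by rewrite /finf /f0 reim.
have E2 : qeval (finf q tau A) v + tau ^+ q * qeval (f0 q tau A) v =
   gq (F (A o30 o30)) (F (A o30 o31)) (F (A o31 o31)) (cX s v) (cY s v).
  rewrite -qeval_lin /gq /cX /cY -(qBB (fun i j => F (A i j))) //.
  by apply: qeval_ext => k l; rewrite /finf /f0 reim' -Fq_qsubst.
rewrite /inBBO; split.
  by case=> h1 h2; rewrite -E1 -E2 h1 h2 !mulr0 addr0.
case=> g1 g2.
have h0 : qeval (f0 q tau A) v = 0.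
  have : (tau - tau ^+ q) * qeval (f0 q tau A) v = 0.
    have -> : (tau - tau ^+ q) * qeval (f0 q tau A) v =
      (qeval (finf q tau A) v + tau * qeval (f0 q tau A) v) -
      (qeval (finf q tau A) v + tau ^+ q * qeval (f0 q tau A) v) by ring.
    by rewrite E1 E2 g1 g2 subrr.
  by move/eqP; rewrite mulf_eq0 (negbTE hts') /= => /eqP.
by split=> //; have := E1; rewrite h0 mulr0 addr0 g1.
Qed.

Definition px (R : option L) : L := match R with Some p => p | None => 1 end.
Definition py (R : option L) : L := match R with Some _ => 1 | None => 0 end.
Definition LR (R : option L) (X Y : L) : L := X * py R - px R * Y.

Definition Gv (t : L) (R : option L) (i : 'I_5) : L :=
  match R with
  | Some al => al * (match nat_of_ord i with 0 => t | 1 => -1 | _ => 0 end)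
               + (match nat_of_ord i with 2 => t | 3 => -1 | _ => 0 end)
  | None => match nat_of_ord i with 0 => t | 1 => -1 | _ => 0 end
  end.

Lemma LR_Some p X Y : LR (Some p) X Y = 0 <-> X = p * Y.
Proof. by rewrite /LR /= mulr1; split=> [/eqP|->]; rewrite ?subrr // subr_eq0 => /eqP. Qed.
Lemma LR_None X Y : LR None X Y = 0 <-> Y = 0.
Proof. by rewrite /LR /= mulr0 mul1r sub0r; split=> [/eqP|->]; rewrite ?oppr0 // oppr_eq0 => /eqP. Qed.

Lemma forall5 (P : 'I_5 -> Prop) : P o50 -> P o51 -> P o52 -> P o53 -> P o54 -> forall i, P i.
Proof. by move=> ? ? ? ? ? i; rewrite (ordE5 i); case: i => [[|[|[|[|[|]]]]]]. Qed.

Lemma on_line_ext (u u' w w' v : 'I_5 -> L) : (forall i, u i = u' i) -> (forall i, w i = w' i) ->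
  (on_line u w v <-> on_line u' w' v).
Proof.
move=> hu hw; split; case=> l [m h]; exists l, m => i; by rewrite h ?hu ?hw.
Qed.
Lemma on_line_sym (u w v : 'I_5 -> L) : on_line u w v <-> on_line w u v.
Proof. by split; case=> l [m h]; exists m, l => i; rewrite h addrC. Qed.

Lemma hts2 : tau - s != 0. Proof. exact: hts'. Qed.

Lemma coordE v :
  [/\ v o50 = (tau * cX s v - s * cX tau v) / (tau - s),
      v o51 = (cX tau v - cX s v) / (tau - s),
      v o52 = (tau * cY s v - s * cY tau v) / (tau - s) &
      v o53 = (cY tau v - cY s v) / (tau - s)].
Proof. by rewrite /cX /cY; split; field; exact: hts2. Qed.

Lemma line_char R1 R2 v : on_line (Gv s R1) (Gv tau R2) v <->
  [/\ v o54 = 0, LR R1 (cX tau v) (cY tau v) = 0 & LR R2 (cX s v) (cY s v) = 0].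
Proof.
split.
  case=> l [m h]; rewrite /LR /cX /cY !h /Gv; clear h.
  by case: R1 => [p|]; case: R2 => [r|] /=; split; ring.
case=> h4 l1 l2.
have [e0 e1 e2 e3] := coordE v.
move: e0 e1 e2 e3 l1 l2.
move: (cX tau v) (cY tau v) (cX s v) (cY s v) => X Y X' Y' e0 e1 e2 e3 l1 l2.
case: R1 l1 => [p|] l1.
  move/LR_Some: l1 => l1.
  case: R2 l2 => [r|] l2.
    move/LR_Some: l2 => l2.
    exists (Y / (s - tau)), (Y' / (tau - s)); apply: forall5;
      rewrite /Gv /= ?e0 ?e1 ?e2 ?e3 ?h4 ?l1 ?l2; field; by rewrite ?hts2 // subr_eq0 eq_sym -subr_eq0 hts2.
  move/LR_None: l2 => l2.
  exists (Y / (s - tau)), (X' / (tau - s)); apply: forall5;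
    rewrite /Gv /= ?e0 ?e1 ?e2 ?e3 ?h4 ?l1 ?l2; field; by rewrite ?hts2 // subr_eq0 eq_sym -subr_eq0 hts2.
move/LR_None: l1 => l1.
case: R2 l2 => [r|] l2.
  move/LR_Some: l2 => l2.
  exists (X / (s - tau)), (Y' / (tau - s)); apply: forall5;
    rewrite /Gv /= ?e0 ?e1 ?e2 ?e3 ?h4 ?l1 ?l2; field; by rewrite ?hts2 // subr_eq0 eq_sym -subr_eq0 hts2.
move/LR_None: l2 => l2.
exists (X / (s - tau)), (X' / (tau - s)); apply: forall5;
  rewrite /Gv /= ?e0 ?e1 ?e2 ?e3 ?h4 ?l1 ?l2; field; by rewrite ?hts2 // subr_eq0 eq_sym -subr_eq0 hts2.
Qed.

Lemma ht1e : t1 = tau + s.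
Proof.
have hs2 : s ^+ 2 = t1 * s + t0.
  by rewrite -FqX htau2 (FqD hc) FqM ht1 ht0.
have : (tau - s) * (tau + s - t1) = 0.
  have -> : (tau - s) * (tau + s - t1) = tau ^+ 2 - s ^+ 2 - t1 * (tau - s) by ring.
  rewrite htau2 hs2; ring.
move/eqP; rewrite mulf_eq0 (negbTE hts2) /= subr_eq0 => /eqP ->; ring.
Qed.
Lemma ht0e : t0 = - (tau * s).
Proof.
have : t0 = tau ^+ 2 - t1 * tau by rewrite htau2; ring.
by rewrite ht1e => ->; ring.
Qed.

Lemma spread_char R v : on_spread q tau t0 t1 R v <->
  [/\ v o54 = 0, LR R (cX tau v) (cY tau v) = 0 & LR (omap F R) (cX s v) (cY s v) = 0].
Proof.
rewrite /on_spread; split.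
  case=> l [m h]; rewrite /LR /cX /cY !h /spread_u /spread_w ht1e ht0e; clear h.
  case: R => [d|] /=; split; rewrite /reF /imF /Fq; field; by rewrite ?hts'.
case=> h4 l1 l2.
have [e0 e1 e2 e3] := coordE v.
move: e0 e1 e2 e3 l1 l2.
move: (cX tau v) (cY tau v) (cX s v) (cY s v) => X Y X' Y' e0 e1 e2 e3 l1 l2.
case: R l1 l2 => [d|] l1 l2.
  move/LR_Some: l1 => l1; move/LR_Some: l2 => l2.
  exists ((tau * Y' - s * Y) / (tau - s)), ((Y - Y') / (tau - s)); apply: forall5;
    rewrite /spread_u /spread_w /= ?e0 ?e1 ?e2 ?e3 ?h4 ?l1 ?l2 ?ht1e ?ht0e /reF /imF /Fq;
    field; by rewrite ?hts'.
move/LR_None: l1 => l1; move/LR_None: l2 => l2.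
exists (v o50), (v o51); apply: forall5;
  rewrite /spread_u /spread_w /= ?e2 ?e3 ?h4 ?l1 ?l2; field; by rewrite ?hts'.
Qed.

Lemma FqGv t R i : F (Gv t R i) = Gv (F t) (omap F R) i.
Proof.
rewrite /Gv; case: R => [al|]; case: i => [[|[|[|[|[|i]]]]] hi] //=;
  by rewrite ?(FqD hc) ?FqM ?(FqN hq hc) ?(Fq0 _ hq) ?Fq1.
Qed.
Lemma iterGv k t R i : iter k F (Gv t R i) = Gv (iter k F t) (omap (iter k F) R) i.
Proof.
elim: k => [|k IH]; first by case: R.
by rewrite iterS IH FqGv; clear IH; case: R.
Qed.
Lemma frobv_gpt k R i : frobv q k (gpt q tau R) i = Gv (iter k F s) (omap (iter k F) R) i.
Proof.
rewrite /frobv expq_iter.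
have -> : gpt q tau R i = Gv s R i by case: R.
by rewrite iterGv.
Qed.

Lemma FqLR R X Y : F (LR R X Y) = LR (omap F R) (F X) (F Y).
Proof. by rewrite /LR (FqB hq hc) !FqM; case: R => [p|] /=; rewrite ?Fq1 ?(Fq0 _ hq). Qed.

Lemma gq_Fq a d b X Y : F (gq a d b X Y) = gq (F a) (F d) (F b) (F X) (F Y).
Proof. by rewrite /gq !(FqD hc) !FqM ?FqX; ring. Qed.

Lemma fact_conj a d b c R1 R2 :
  (forall X Y, gq a d b X Y = c * LR R1 X Y * LR R2 X Y) ->
  forall X Y, gq (F a) (F d) (F b) X Y = F c * LR (omap F R1) X Y * LR (omap F R2) X Y.
Proof.
move=> h.
have ea : a = c * LR R1 1 0 * LR R2 1 0 by rewrite -h /gq; ring.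
have eb : b = c * LR R1 0 1 * LR R2 0 1 by rewrite -h /gq; ring.
have ed : d = c * LR R1 1 1 * LR R2 1 1 - a - b by rewrite -h /gq; ring.
subst d; subst a; subst b => X Y.
rewrite !(FqB hq hc) !FqM !FqLR ?Fq1 ?(Fq0 _ hq) /gq /LR; ring.
Qed.

Lemma fact_iff a d b c R1 R2 X Y : c != 0 ->
  (forall X Y, gq a d b X Y = c * LR R1 X Y * LR R2 X Y) ->
  (gq a d b X Y = 0 <-> LR R1 X Y = 0 \/ LR R2 X Y = 0).
Proof.
move=> hc0 h; rewrite h; split.
  by move/eqP; rewrite !mulf_eq0 (negbTE hc0) /= => /orP[] /eqP; [left|right].
by case=> ->; rewrite ?mulr0 ?mul0r.
Qed.

Lemma fact_SS' a d b p r : a * (p + r) + d = 0 -> gq a d b p 1 = 0 ->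
  forall X Y, gq a d b X Y = a * LR (Some p) X Y * LR (Some r) X Y.
Proof.
move=> hd h1.
move=> X Y; apply/eqP; rewrite -subr_eq0.
have -> : gq a d b X Y - a * LR (Some p) X Y * LR (Some r) X Y =
  (a * (p + r) + d) * (X * Y) + (gq a d b p 1 - p * (a * (p + r) + d)) * Y ^+ 2.
  by rewrite /gq /LR /=; ring.
by rewrite hd h1 mulr0 subrr !mul0r addr0.
Qed.

Lemma fact_SS a d b p r : p != r -> gq a d b p 1 = 0 -> gq a d b r 1 = 0 ->
  forall X Y, gq a d b X Y = a * LR (Some p) X Y * LR (Some r) X Y.
Proof.
move=> hpr h1 h2.
apply: fact_SS' => //.
have : (p - r) * (a * (p + r) + d) = 0.
  have -> : (p - r) * (a * (p + r) + d) = gq a d b p 1 - gq a d b r 1 by rewrite /gq; ring.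
  by rewrite h1 h2 subrr.
by move/eqP; rewrite mulf_eq0 subr_eq0 (negbTE hpr) /= => /eqP.
Qed.

Lemma fact_SN a d b p : gq a d b p 1 = 0 -> gq a d b 1 0 = 0 ->
  forall X Y, gq a d b X Y = - d * LR (Some p) X Y * LR None X Y.
Proof.
move=> h1 h2 X Y; apply/eqP; rewrite -subr_eq0.
have -> : gq a d b X Y - - d * LR (Some p) X Y * LR None X Y =
  gq a d b 1 0 * X ^+ 2 + (gq a d b p 1 - p ^+ 2 * gq a d b 1 0) * Y ^+ 2.
  by rewrite /gq /LR /=; ring.
by rewrite h1 h2 mulr0 subrr !mul0r addr0.
Qed.

Lemma fact2 a d b R1 R2 : R1 <> R2 -> gq a d b (px R1) (py R1) = 0 -> gq a d b (px R2) (py R2) = 0 ->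
  exists c, forall X Y, gq a d b X Y = c * LR R1 X Y * LR R2 X Y.
Proof.
case: R1 => [p|]; case: R2 => [r|] /= hne h1 h2.
- exists a; apply: fact_SS => //; apply/eqP => e; apply: hne; by rewrite e.
- exists (0 - d); move=> X Y; rewrite sub0r; exact: fact_SN h1 h2 X Y.
- exists (0 - d) => X Y; rewrite sub0r (fact_SN h2 h1) -!mulrA; congr (_ * _); exact: mulrC.
- by case: hne.
Qed.

Lemma LR2_zero R1 R2 X Y : R1 <> R2 -> LR R1 X Y = 0 -> LR R2 X Y = 0 -> X = 0 /\ Y = 0.
Proof.
case: R1 => [p|]; case: R2 => [r|] // hne; rewrite ?LR_Some ?LR_None.
- move=> e1 e2; have : (p - r) * Y = 0 by rewrite mulrBl -e1 -e2 subrr.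
  move/eqP; rewrite mulf_eq0 subr_eq0 => /orP[/eqP e|/eqP e]; first by case: hne; rewrite e.
  by rewrite e1 e mulr0.
- by move=> e1 e2; rewrite e1 e2 mulr0.
- by move=> e1 e2; rewrite e2 e1 mulr0.
Qed.

Lemma gpt_Gv R i : gpt q tau R i = Gv s R i. Proof. by case: R. Qed.
Lemma frob1 R i : frobv q 1 (gpt q tau R) i = Gv tau (omap F R) i.
Proof. by rewrite frobv_gpt; case: R => /=; rewrite htK. Qed.
Lemma frob2 R i : frobv q 2 (gpt q tau R) i = Gv s (omap (fun x => F (F x)) R) i.
Proof. by rewrite frobv_gpt; case: R => /=; rewrite htK. Qed.
Lemma frob3 R i : frobv q 3 (gpt q tau R) i = Gv tau (omap (fun x => F (F (F x))) R) i.
Proof. by rewrite frobv_gpt; case: R => /=; rewrite !htK. Qed.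
Lemma frob4 R i : frobv q 4 (gpt q tau R) i = Gv s R i.
Proof. rewrite frobv_gpt; congr Gv; first exact: (Fq4 hc (F tau)). by case: R => //= p; congr Some; exact: (Fq4 hc p). Qed.

Lemma master (A : 'I_3 -> 'I_3 -> L) R1 R2 c v : c != 0 ->
  (forall X Y, gq (A o30 o30) (A o30 o31) (A o31 o31) X Y = c * LR R1 X Y * LR R2 X Y) ->
  (inBBO q tau A v /\ inSigmaInf v <->
   [/\ v o54 = 0, LR R1 (cX tau v) (cY tau v) = 0 \/ LR R2 (cX tau v) (cY tau v) = 0
     & LR (omap F R1) (cX s v) (cY s v) = 0 \/ LR (omap F R2) (cX s v) (cY s v) = 0]).
Proof.
move=> hc0 h.
have hc1 : F c != 0 by rewrite (Fq_eq0 hq).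
have h' := fact_conj h.
rewrite /inSigmaInf; split.
  case=> hB h4; move/(inBBO_char A h4): hB => [g1 g2]; split=> //.
    exact/(fact_iff _ _ hc0 h).
  exact/(fact_iff _ _ hc1 h').
case=> h4 o1 o2; split=> //; apply/(inBBO_char A h4); split.
  exact/(fact_iff _ _ hc0 h).
exact/(fact_iff _ _ hc1 h').
Qed.

Lemma logic4 (Z A1 A2 B1 B2 S1 S2 S3 S4 : Prop) :
  (S1 <-> [/\ Z, A1 & B1]) -> (S2 <-> [/\ Z, A2 & B2]) ->
  (S3 <-> [/\ Z, A1 & B2]) -> (S4 <-> [/\ Z, A2 & B1]) ->
  ([/\ Z, A1 \/ A2 & B1 \/ B2] <-> [\/ S1, S2, S3 | S4]).
Proof.
move=> [f1 e1] [f2 e2] [f3 e3] [f4 e4]; split.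
  case=> z [a|a] [b|b].
  - by apply: Or41; apply: e1.
  - by apply: Or43; apply: e3.
  - by apply: Or44; apply: e4.
  - by apply: Or42; apply: e2.
by move=> [/f1|/f2|/f3|/f4] [z a b]; split=> //; tauto.
Qed.

Lemma lines12 (A : 'I_3 -> 'I_3 -> L) R1 R2 c v : c != 0 ->
  (forall X Y, gq (A o30 o30) (A o30 o31) (A o31 o31) X Y = c * LR R1 X Y * LR R2 X Y) ->
  (inBBO q tau A v /\ inSigmaInf v <->
   [\/ on_spread q tau t0 t1 R1 v, on_spread q tau t0 t1 R2 v,
        on_line (gpt q tau R1) (frobv q 1 (gpt q tau R2)) v
      | on_line (frobv q 1 (gpt q tau R1)) (gpt q tau R2) v]).
Proof.
move=> hc0 h; rewrite (master _ hc0 h); apply: logic4.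
- exact: spread_char.
- exact: spread_char.
- rewrite (on_line_ext _ (gpt_Gv R1) (frob1 R2)); exact: line_char.
- rewrite (on_line_ext _ (frob1 R1) (gpt_Gv R2)) on_line_sym; exact: line_char.
Qed.

Lemma onO_char (A : 'I_3 -> 'I_3 -> L) R :
  onO A R <-> gq (A o30 o30) (A o30 o31) (A o31 o31) (px R) (py R) = 0.
Proof.
rewrite /onO; suff -> : qeval A (linf_pt R) = gq (A o30 o30) (A o30 o31) (A o31 o31) (px R) (py R) by [].
by rewrite qeval3 /gq; case: R => [z|] /=; ring.
Qed.

Lemma inF2E (x : L) : inF q 2 x <-> F (F x) = x. Proof. by rewrite /inF expq_iter. Qed.
Lemma inF1E (x : L) : inF q 1 x <-> F x = x. Proof. by rewrite /inF expq_iter. Qed.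

Lemma noK a d b : a != 0 -> (forall z, F (F z) = z -> gq a d b z 1 != 0) ->
  forall X Y, F (F X) = X -> F (F Y) = Y -> gq a d b X Y = 0 -> X = 0 /\ Y = 0.
Proof.
move=> ha hz X Y hX hY h.
have [Y0|Yn] := eqVneq Y 0.
  split=> //; move: h; rewrite Y0 /gq => /eqP.
  rewrite !mulr0 expr0n /= mulr0 !addr0 mulf_eq0 (negbTE ha) expf_eq0 /=.
  by move/eqP.
have hK : F (F (X / Y)) = X / Y by rewrite !FqM !FqV hX hY.
have e : gq a d b (X / Y) 1 = gq a d b X Y / Y ^+ 2 by rewrite /gq; field; rewrite Yn.
by have := hz _ hK; rewrite e h mul0r eqxx.
Qed.

Lemma zero_coords v : v o54 = 0 -> cX tau v = 0 -> cY tau v = 0 -> cX s v = 0 -> cY s v = 0 ->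
  forall i, v i = 0.
Proof.
move=> h4 h1 h2 h3 h5; have [e0 e1 e2 e3] := coordE v.
apply: forall5; rewrite ?e0 ?e1 ?e2 ?e3 ?h1 ?h2 ?h3 ?h5 ?h4 //; field; exact: hts2.
Qed.

Lemma noK_pts (A : 'I_3 -> 'I_3 -> L) v :
  A o30 o30 != 0 ->
  (forall z, F (F z) = z -> gq (A o30 o30) (A o30 o31) (A o31 o31) z 1 != 0) ->
  (forall i, F (F (v i)) = v i) -> v o54 = 0 -> inBBO q tau A v -> forall i, v i = 0.
Proof.
move=> ha hz hv h4 /(inBBO_char A h4) [g1 g2].
have hX : F (F (cX tau v)) = cX tau v by rewrite /cX !(FqD hc) !FqM !hv htK.
have hY : F (F (cY tau v)) = cY tau v by rewrite /cY !(FqD hc) !FqM !hv htK.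
have hX' : F (F (cX s v)) = cX s v by rewrite /cX !(FqD hc) !FqM !hv htK.
have hY' : F (F (cY s v)) = cY s v by rewrite /cY !(FqD hc) !FqM !hv htK.
have [X0 Y0] := noK ha hz hX hY g1.
move: g2; rewrite -hX' -hY' -gq_Fq => /eqP; rewrite (Fq_eq0 hq) => /eqP g2.
have hX'' : F (F (F (cX s v))) = F (cX s v) by rewrite hX'.
have hY'' : F (F (F (cY s v))) = F (cY s v) by rewrite hY'.
have [X0' Y0'] := noK ha hz hX'' hY'' g2.
apply: zero_coords => //.
- by rewrite -hX' X0' (Fq0 _ hq).
- by rewrite -hY' Y0' (Fq0 _ hq).
Qed.

Lemma cross_Fq R1 R2 v : R1 <> R2 -> (forall i, F (v i) = v i) -> v o54 = 0 ->
  LR R1 (cX tau v) (cY tau v) = 0 -> LR (omap F R2) (cX s v) (cY s v) = 0 -> forall i, v i = 0.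
Proof.
move=> hne hv h4 l1 l2.
have eX : cX s v = F (cX tau v) by rewrite /cX (FqD hc) FqM !hv.
have eY : cY s v = F (cY tau v) by rewrite /cY (FqD hc) FqM !hv.
move: l2; rewrite eX eY -FqLR => /eqP; rewrite (Fq_eq0 hq) => /eqP l2.
have [X0 Y0] := LR2_zero hne l1 l2.
by apply: zero_coords => //; rewrite ?eX ?eY ?X0 ?Y0 (Fq0 _ hq).
Qed.

Lemma three_in_two (P Q : option L) :
  (None = P \/ None = Q) -> (Some 0 = P \/ Some 0 = Q) -> (Some 1 = P \/ Some 1 = Q) -> False.
Proof.
have h01 : (0 : L) <> 1 by move/eqP; rewrite eq_sym oner_eq0.
by case=> <- [] e0 [] e1; congruence.
Qed.

Lemma K0 : F (F (0 : L)) = 0. Proof. by rewrite !(Fq0 _ hq). Qed.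
Lemma K1 : F (F (1 : L)) = 1. Proof. by rewrite !Fq1. Qed.

Lemma part1 (A : 'I_3 -> 'I_3 -> L) (P Q : option L) :
     opt_inF q 2 P -> opt_inF q 2 Q -> P <> Q ->
     (forall X, opt_inF q 2 X -> (onO A X <-> X = P \/ X = Q)) ->
     (forall v, ptPG q 1 v ->
        (inBBO q tau A v /\ inSigmaInf v <->
         on_spread q tau t0 t1 P v \/ on_spread q tau t0 t1 Q v)) /\
     (forall v, ptPG q 2 v ->
        (inBBO q tau A v /\ inSigmaInf v <->
         [\/ on_spread q tau t0 t1 P v, on_spread q tau t0 t1 Q v,
             on_line (gpt q tau P) (frobv q 1 (gpt q tau Q)) v
           | on_line (frobv q 1 (gpt q tau P)) (gpt q tau Q) v])) /\
     (forall v, ptPG q 4 v ->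
        (inBBO q tau A v /\ inSigmaInf v <->
         [\/ on_spread q tau t0 t1 P v, on_spread q tau t0 t1 Q v,
             on_line (gpt q tau P) (frobv q 1 (gpt q tau Q)) v
           | on_line (frobv q 1 (gpt q tau P)) (gpt q tau Q) v])).
Proof.
move=> hP hQ hPQ hr.
have rP : gq (A o30 o30) (A o30 o31) (A o31 o31) (px P) (py P) = 0.
  by apply/onO_char; apply/(hr P hP); left.
have rQ : gq (A o30 o30) (A o30 o31) (A o31 o31) (px Q) (py Q) = 0.
  by apply/onO_char; apply/(hr Q hQ); right.
have [c hf] := fact2 hPQ rP rQ.
have hc0 : c != 0.
  apply/eqP => c0.
  have all0 : forall R, opt_inF q 2 R -> R = P \/ R = Q.
    move=> R hR; apply/(hr R hR)/onO_char; by rewrite hf c0 !mul0r.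
  apply: (@three_in_two P Q).
  - by case: (all0 None I) => ->; [left|right].
  - by case: (all0 (Some 0) (proj2 (inF2E _) K0)) => ->; [left|right].
  - by case: (all0 (Some 1) (proj2 (inF2E _) K1)) => ->; [left|right].
split; last split; last by move=> v _; exact: (lines12 _ hc0 hf).
- move=> v [[i hi] hv]; rewrite (lines12 _ hc0 hf).
  have hv' : forall i, F (v i) = v i by move=> j; apply/inF1E/hv.
  split; last by case=> h; [apply: Or41|apply: Or42].
  case=> h; [by left|by right| |].
  + move: h; rewrite (on_line_ext _ (gpt_Gv P) (frob1 Q)) line_char => -[h4 l1 l2].
    by have := cross_Fq hPQ hv' h4 l1 l2 i; move/eqP: hi.
  + move: h; rewrite (on_line_ext _ (frob1 P) (gpt_Gv Q)) on_line_sym line_char => -[h4 l1 l2].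
    have hQP : Q <> P by move=> e; apply: hPQ.
    by have := cross_Fq hQP hv' h4 l1 l2 i; move/eqP: hi.
- by move=> v _; exact: (lines12 _ hc0 hf).
Qed.

Lemma logic4' (Z A1 A2 B1 B2 S1 S2 S3 S4 : Prop) :
  (S1 <-> [/\ Z, A1 & B1]) -> (S2 <-> [/\ Z, A2 & B1]) ->
  (S3 <-> [/\ Z, A2 & B2]) -> (S4 <-> [/\ Z, A1 & B2]) ->
  ([/\ Z, A1 \/ A2 & B1 \/ B2] <-> [\/ S1, S2, S3 | S4]).
Proof.
move=> [f1 e1] [f2 e2] [f3 e3] [f4 e4]; split.
  case=> z [a|a] [b|b].
  - by apply: Or41; apply: e1.
  - by apply: Or44; apply: e4.
  - by apply: Or42; apply: e2.
  - by apply: Or43; apply: e3.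
by move=> [/f1|/f2|/f3|/f4] [z a b]; split=> //; tauto.
Qed.

Lemma part2 (A : 'I_3 -> 'I_3 -> L) :
  F (F (A o30 o30)) = A o30 o30 -> F (F (A o30 o31)) = A o30 o31 -> F (F (A o31 o31)) = A o31 o31 ->
  forall P : option L,
     opt_inF q 2 P ->
     (forall X, opt_inF q 2 X -> (onO A X <-> X = P)) ->
     (forall v, ptPG q 1 v ->
        (inBBO q tau A v /\ inSigmaInf v <-> on_spread q tau t0 t1 P v)) /\
     (forall v, ptPG q 2 v ->
        (inBBO q tau A v /\ inSigmaInf v <-> on_spread q tau t0 t1 P v)) /\
     (forall v, ptPG q 4 v ->
        (inBBO q tau A v /\ inSigmaInf v <-> on_spread q tau t0 t1 P v)).
Proof.
move=> hKa hKd hKb P hP hr.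
have rP : gq (A o30 o30) (A o30 o31) (A o31 o31) (px P) (py P) = 0.
  by apply/onO_char; apply/(hr P hP).
have [c [hc0 hf]] : exists c, c != 0 /\
    forall X Y, gq (A o30 o30) (A o30 o31) (A o31 o31) X Y = c * LR P X Y * LR P X Y.
  case: P hP hr rP => [p|] hP hr rP.
    have ha : A o30 o30 != 0.
      apply/eqP => a0; have : None = Some p by apply/(hr None I)/onO_char; rewrite /= /gq a0; ring.
      by [].
    pose r := - (A o30 o31 / A o30 o30) - p.
    have hd : A o30 o30 * (p + r) + A o30 o31 = 0 by rewrite /r; field.
    have hpK : F (F p) = p by apply/inF2E.
    have hrK : F (F r) = r.
      by rewrite /r !(FqB hq hc) !(FqN hq hc) !FqM !FqV hKd hKa hpK.
    have rr : gq (A o30 o30) (A o30 o31) (A o31 o31) r 1 = 0.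
      have -> : gq (A o30 o30) (A o30 o31) (A o31 o31) r 1 =
        gq (A o30 o30) (A o30 o31) (A o31 o31) p 1 + (r - p) * (A o30 o30 * (p + r) + A o30 o31).
        by rewrite /gq; ring.
      by rewrite hd mulr0 addr0; exact: rP.
    have [er] : Some r = Some p by apply/(hr (Some r) (proj2 (inF2E r) hrK))/onO_char.
    exists (A o30 o30); split=> // X Y; rewrite (fact_SS' hd rP) er //.
  have a0 : A o30 o30 = 0.
    by rewrite -rP /gq /=; ring.
  have d0 : A o30 o31 = 0.
    have [//|hd] := eqVneq (A o30 o31) 0.
    pose z := - (A o31 o31 / A o30 o31).
    have hzK : F (F z) = z by rewrite /z !(FqN hq hc) !FqM !FqV hKd hKb.
    have : Some z = None.
      apply/(hr (Some z) (proj2 (inF2E z) hzK))/onO_char; rewrite /= /gq a0 /z; field.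
      exact: hd.
    by [].
  have hb : A o31 o31 != 0.
    apply/eqP => b0.
    have : Some (0 : L) = None.
      apply/(hr (Some 0) (proj2 (inF2E _) K0))/onO_char; rewrite /= /gq a0 d0 b0; ring.
    by [].
  exists (A o31 o31); split=> // X Y; rewrite /gq /LR /= a0 d0; ring.
have key : forall v, (inBBO q tau A v /\ inSigmaInf v <-> on_spread q tau t0 t1 P v).
  move=> v; rewrite (master _ hc0 hf) spread_char; split.
    by case=> z [a|a] [b|b]; split.
  by case=> z a b; split=> //; left.
by split; [|split]; move=> v _; exact: key.
Qed.

Lemma part3 (A : 'I_3 -> 'I_3 -> L) :
  F (F (A o30 o30)) = A o30 o30 -> F (F (A o30 o31)) = A o30 o31 -> F (F (A o31 o31)) = A o31 o31 ->
  forall P : option L,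
     (forall X, opt_inF q 2 X -> ~ onO A X) ->
     onO A P ->
     (forall v, ptPG q 1 v -> ~ (inBBO q tau A v /\ inSigmaInf v)) /\
     (forall v, ptPG q 2 v -> ~ (inBBO q tau A v /\ inSigmaInf v)) /\
     (forall v, ptPG q 4 v ->
        (inBBO q tau A v /\ inSigmaInf v <->
         [\/ on_line (gpt q tau P) (frobv q 1 (gpt q tau P)) v,
             on_line (frobv q 1 (gpt q tau P)) (frobv q 2 (gpt q tau P)) v,
             on_line (frobv q 2 (gpt q tau P)) (frobv q 3 (gpt q tau P)) v
           | on_line (frobv q 3 (gpt q tau P)) (frobv q 4 (gpt q tau P)) v])).
Proof.
move=> hKa hKd hKb P hn hPr.
have ha : A o30 o30 != 0.
  apply/eqP => a0; apply: (hn None I); apply/onO_char; rewrite /= /gq a0; ring.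
have hz : forall z, F (F z) = z -> gq (A o30 o30) (A o30 o31) (A o31 o31) z 1 != 0.
  move=> z hzK; apply/eqP => e; apply: (hn (Some z)); [exact/inF2E | exact/onO_char].
case: P hPr => [p|] hPr; last first.
  exfalso; move/onO_char: hPr => e; move/eqP: ha; apply.
  have -> : A o30 o30 = gq (A o30 o30) (A o30 o31) (A o31 o31) (px None) (py None) by rewrite /gq /=; ring.
  exact: e.
have rp : gq (A o30 o30) (A o30 o31) (A o31 o31) p 1 = 0 by move/onO_char: hPr.
have hpK : F (F p) != p by apply/eqP => e; move: (hz p e); rewrite rp eqxx.
have rp2 : gq (A o30 o30) (A o30 o31) (A o31 o31) (F (F p)) 1 = 0.
  have := congr1 (fun x => F (F x)) rp; rewrite /= !gq_Fq hKa hKd hKb !Fq1 !(Fq0 _ hq); exact.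
have hf := fact_SS (negbT (contraNF (fun e => introT eqP (esym (eqP e))) hpK)) rp rp2.
split; last split.
- move=> v [[i hi] hv] [hB hS].
  have hv' : forall i, F (F (v i)) = v i by move=> j; rewrite !(proj1 (inF1E _) (hv j)).
  by have := noK_pts ha hz hv' hS hB i; move/eqP: hi.
- move=> v [[i hi] hv] [hB hS].
  have hv' : forall i, F (F (v i)) = v i by move=> j; apply/inF2E/hv.
  by have := noK_pts ha hz hv' hS hB i; move/eqP: hi.
move=> v _; rewrite (master _ ha hf); apply: logic4'.
- rewrite (on_line_ext _ (gpt_Gv _) (frob1 _)); exact: line_char.
- rewrite (on_line_ext _ (frob1 _) (frob2 _)) on_line_sym; exact: line_char.
- rewrite (on_line_ext _ (frob2 _) (frob3 _)); exact: line_char.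
- rewrite (on_line_ext _ (frob3 _) (frob4 _)) on_line_sym; exact: line_char.
Qed.

End Main.
Unset Implicit Arguments.

Theorem theorem4p3 (L : finFieldType) (q : nat) (tau t0 t1 : L)
  (A : 'I_3 -> 'I_3 -> L) :
  (1 < q)%N -> #|L| = (q ^ 4)%N ->
  (* tau is a primitive element of F_{q^2} with minimal polynomial
     x^2 - t1 x - t0 over F_q *)
  inF q 2 tau -> (q ^ 2 - 1)%N.-primitive_root tau ->
  inF q 1 t0 -> inF q 1 t1 -> tau ^+ 2 = t1 * tau + t0 ->
  (* O : f = 0 is a non-degenerate conic of PG(2,q^2) *)
  (forall i j : 'I_3, (i <= j)%N -> inF q 2 (A i j)) ->
  nondeg_conic A ->
  (* (1) *)
  (forall P Q : option L,
     opt_inF q 2 P -> opt_inF q 2 Q -> P <> Q ->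
     (forall X, opt_inF q 2 X -> (onO A X <-> X = P \/ X = Q)) ->
     (forall v, ptPG q 1 v ->
        (inBBO q tau A v /\ inSigmaInf v <->
         on_spread q tau t0 t1 P v \/ on_spread q tau t0 t1 Q v)) /\
     (forall v, ptPG q 2 v ->
        (inBBO q tau A v /\ inSigmaInf v <->
         [\/ on_spread q tau t0 t1 P v, on_spread q tau t0 t1 Q v,
             on_line (gpt q tau P) (frobv q 1 (gpt q tau Q)) v
           | on_line (frobv q 1 (gpt q tau P)) (gpt q tau Q) v])) /\
     (forall v, ptPG q 4 v ->
        (inBBO q tau A v /\ inSigmaInf v <->
         [\/ on_spread q tau t0 t1 P v, on_spread q tau t0 t1 Q v,
             on_line (gpt q tau P) (frobv q 1 (gpt q tau Q)) v
           | on_line (frobv q 1 (gpt q tau P)) (gpt q tau Q) v]))) /\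
  (* (2) *)
  (forall P : option L,
     opt_inF q 2 P ->
     (forall X, opt_inF q 2 X -> (onO A X <-> X = P)) ->
     (forall v, ptPG q 1 v ->
        (inBBO q tau A v /\ inSigmaInf v <-> on_spread q tau t0 t1 P v)) /\
     (forall v, ptPG q 2 v ->
        (inBBO q tau A v /\ inSigmaInf v <-> on_spread q tau t0 t1 P v)) /\
     (forall v, ptPG q 4 v ->
        (inBBO q tau A v /\ inSigmaInf v <-> on_spread q tau t0 t1 P v))) /\
  (* (3) *)
  (forall P : option L,
     (forall X, opt_inF q 2 X -> ~ onO A X) ->
     onO A P ->
     (forall v, ptPG q 1 v -> ~ (inBBO q tau A v /\ inSigmaInf v)) /\
     (forall v, ptPG q 2 v -> ~ (inBBO q tau A v /\ inSigmaInf v)) /\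
     (forall v, ptPG q 4 v ->
        (inBBO q tau A v /\ inSigmaInf v <->
         [\/ on_line (gpt q tau P) (frobv q 1 (gpt q tau P)) v,
             on_line (frobv q 1 (gpt q tau P)) (frobv q 2 (gpt q tau P)) v,
             on_line (frobv q 2 (gpt q tau P)) (frobv q 3 (gpt q tau P)) v
           | on_line (frobv q 3 (gpt q tau P)) (frobv q 4 (gpt q tau P)) v]))).
Proof.
Proof.
move=> hq hc htK hprim ht0 ht1 htau2 hA _.
have htK' : Fq q (Fq q tau) = tau by apply/inF2E.
have ht0' : Fq q t0 = t0 by apply/inF1E.
have ht1' : Fq q t1 = t1 by apply/inF1E.
have hts : tau != Fq q tau.
  have n0 := prim_order_gt0 hprim.
  have tau0 : tau != 0.
    apply/eqP => e0; have := prim_expr_order hprim; rewrite e0 expr0n.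
    by move: n0; rewrite lt0n => /negbTE -> /eqP; rewrite eq_sym oner_eq0.
  apply/eqP => e.
  have h1 : tau ^+ q.-1 = 1.
    apply: (mulIf tau0); rewrite mul1r -exprSr prednK; last by lia.
    by rewrite /Fq in e; rewrite -e.
  have := prim_order_dvd hprim q.-1; rewrite h1 eqxx => /dvdn_leq.
  have : (0 < q.-1)%N by lia.
  move=> h /(_ h); rewrite -[(q ^ 2)%N]/(q * q)%N.
  by nia.
have hKa : Fq q (Fq q (A o30 o30)) = A o30 o30 by apply/inF2E/hA.
have hKd : Fq q (Fq q (A o30 o31)) = A o30 o31 by apply/inF2E/hA.
have hKb : Fq q (Fq q (A o31 o31)) = A o31 o31 by apply/inF2E/hA.
split; [|split].
- move=> P Q hP hQ hPQ hr; exact: (part1 hq hc htK' hts ht0' ht1' htau2 hP hQ hPQ hr).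
- move=> P hP hr; exact: (part2 hq hc hts ht0' ht1' htau2 hKa hKd hKb hP hr).
- move=> P hn hPr; exact: (part3 hq hc htK' hts hKa hKd hKb hn hPr).
Qed.
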